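(* Let $X$ be a locally connected space and let $\mathcal{G}, \mathcal{F}, \mathcal{F}'$ be locally constant sheaves of $k$-vector spaces on $X$. Let $\Phi = (\Phi_x)_{x\in X}$ be a stalkwise isomorphism $\mathcal{G}\to\mathcal{F}$ and $\Psi = (\Psi_x)_{x\in X}$ a stalkwise isomorphism $\mathcal{G}\to\mathcal{F}'$, and suppose $\Phi$ and $\Psi$ have the same deviation, i.e. for all $x,y\in X$ and every connected open set $U\ni x,y$ which is simple for all three sheaves, $\upsilon(\Phi)^U_{yx} = \upsilon(\Psi)^U_{yx}$. Then there is a unique isomorphism of sheaves $T\colon \mathcal{F}\to\mathcal{F}'$ such that $\Psi_x = T_x\Phi_x$ for all $x\in X$.
   Context: An open set $U$ is simple for a sheaf $\mathcal{S}$ if $\mathcal{S}|_U$ is isomorphic to a constant sheaf; if $U$ is also connected, each stalk restriction $\mathcal{S}_{x\in U}\colon \mathcal{S}(U)\to\mathcal{S}_x$ ($x\in U$) is an isomorphism. A stalkwise isomorphism $\Phi\colon\mathcal{G}\to\mathcal{F}$ is a family of linear isomorphisms $\Phi_x\colon\mathcal{G}_x\to\mathcal{F}_x$, $x\in X$, not required to be natural. Its deviation assigns to $x,y\in X$ and a connected open $U\ni x,y$ simple for $\mathcal{G}$ and $\mathcal{F}$ the automorphism $\upsilon(\Phi)^U_{yx} = \mathcal{G}_{y\in U}^{-1}\,\Phi_y^{-1}\,\mathcal{F}_{y\in U}\,\mathcal{F}_{x\in U}^{-1}\,\Phi_x\,\mathcal{G}_{x\in U}$ of $\mathcal{G}(U)$.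 *)

(* Defs.v *)
From HB Require Import structures.
From mathcomp Require Import all_boot all_algebra.
From Stdlib Require Import ClassicalEpsilon.
Set Implicit Arguments. Unset Strict Implicit. Unset Printing Implicit Defensive.
Import GRing.Theory.
Local Open Scope ring_scope.

Record topology (X : Type) := Topology {
  is_open : (X -> Prop) -> Prop;
  open_full : is_open (fun _ => True);
  open_inter : forall U V, is_open U -> is_open V -> is_open (fun x => U x /\ V x);
  open_union : forall (I : Type) (F : I -> X -> Prop),
      (forall i, is_open (F i)) -> is_open (fun x => exists i, F i x) }.

Record opens (X : Type) (tX : topology X) := Opens {
  oset : X -> Prop;
  oopen : is_open tX oset }.

Definition otop X (tX : topology X) : opens tX := Opens (open_full tX).
Definition ointer X (tX : topology X) (U V : opens tX) : opens tX :=
  Opens (open_inter (oopen U) (oopen V)).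

Definition osubset X (tX : topology X) (U V : opens tX) : Prop :=
  forall x, oset U x -> oset V x.

Lemma osubset_interl X (tX : topology X) (U V : opens tX) : osubset (ointer U V) U.
Proof. by move=> x []. Qed.
Lemma osubset_interr X (tX : topology X) (U V : opens tX) : osubset (ointer U V) V.
Proof. by move=> x []. Qed.

Definition connected X (tX : topology X) (U : opens tX) : Prop :=
  forall A B : opens tX,
    (forall y, oset U y -> oset A y \/ oset B y) ->
    (forall y, oset U y -> oset A y -> oset B y -> False) ->
    (forall y, oset U y -> oset A y) \/ (forall y, oset U y -> oset B y).

Definition locally_connected X (tX : topology X) : Prop :=
  forall (x : X) (V : opens tX), oset V x ->
    exists U : opens tX, [/\ oset U x, osubset U V & connected U].

Record presheaf (k : fieldType) X (tX : topology X) := Presheaf {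
  sec : opens tX -> lmodType k;
  res : forall U V : opens tX, osubset U V -> sec V -> sec U;
  res_linear : forall U V (h : osubset U V), linear (res h);
  res_id : forall U (h : osubset U U) s, res h s = s;
  res_comp : forall U V W (h1 : osubset U V) (h2 : osubset V W) (h3 : osubset U W) s,
      res h1 (res h2 s) = res h3 s }.

(* Stalk of a presheaf at x, given by the standard concrete description of the
   filtered colimit colim_{U ∋ x} F(U): a vector space with linear germ maps
   compatible with restrictions, jointly surjective, and such that two sections
   have the same germ iff they agree on a smaller neighbourhood of x.
   (This determines the stalk up to unique isomorphism.) *)
Record stalk (k : fieldType) X (tX : topology X) (F : presheaf k tX) (x : X) := Stalk {
  st : lmodType k;
  germ : forall U : opens tX, oset U x -> sec F U -> st;
  germ_linear : forall U (hx : oset U x), linear (germ hx);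
  germ_res : forall U V (h : osubset U V) (hxU : oset U x) (hxV : oset V x) s,
      germ hxU (res h s) = germ hxV s;
  germ_surj : forall v : st, exists U (hx : oset U x) s, germ hx s = v;
  germ_eq : forall U V (hxU : oset U x) (hxV : oset V x) s t,
      germ hxU s = germ hxV t ->
      exists W (hWU : osubset W U) (hWV : osubset W V), oset W x /\ res hWU s = res hWV t }.

Record sheaf (k : fieldType) X (tX : topology X) := Sheaf {
  psh : presheaf k tX;
  locality : forall (U : opens tX) (I : Type) (V : I -> opens tX)
      (hV : forall i, osubset (V i) U),
      (forall x, oset U x -> exists i, oset (V i) x) ->
      forall s t : sec psh U, (forall i, res (hV i) s = res (hV i) t) -> s = t;
  gluing : forall (U : opens tX) (I : Type) (V : I -> opens tX)
      (hV : forall i, osubset (V i) U),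
      (forall x, oset U x -> exists i, oset (V i) x) ->
      forall si : forall i, sec psh (V i),
      (forall i j, res (@osubset_interl X tX (V i) (V j)) (si i)
                   = res (@osubset_interr X tX (V i) (V j)) (si j)) ->
      exists s : sec psh U, forall i, res (hV i) s = si i;
  stalks : forall x : X, stalk psh x }.

Definition stalk_at k X (tX : topology X) (S : sheaf k tX) (x : X) : lmodType k :=
  st (stalks S x).
Definition germ_at k X (tX : topology X) (S : sheaf k tX) (x : X) (U : opens tX)
  (hx : oset U x) : sec (psh S) U -> stalk_at S x := germ (stalks S x) hx.
Arguments germ_at {k X tX} S {x U} hx.

Definition loc_const_on X (tX : topology X) (W : opens tX) (A : Type) (f : X -> A) : Prop :=
  forall y, oset W y ->
    exists V : opens tX, [/\ oset V y, osubset V W & forall z, oset V z -> f z = f y].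

(* U is simple for S: S|_U is isomorphic to the constant sheaf A_U with some
   value A, whose sections over W ⊆ U are the locally constant functions W -> A.
   The isomorphism is written out: phi W : S(W) -> (locally constant W -> A)
   (functions on X, only their values on W matter) is linear, injective,
   surjective onto locally constant functions, and natural in W. *)
Definition simple k X (tX : topology X) (S : sheaf k tX) (U : opens tX) : Prop :=
  exists (A : lmodType k)
         (phi : forall W : opens tX, osubset W U -> sec (psh S) W -> X -> A),
  [/\ (forall W h (a : k) s t y, oset W y ->
          phi W h (a *: s + t) y = a *: phi W h s y + phi W h t y),
      (forall W h s, loc_const_on W (phi W h s)),
      (forall W h s t, (forall y, oset W y -> phi W h s y = phi W h t y) -> s = t),
      (forall W h (f : X -> A), loc_const_on W f ->
          exists s, forall y, oset W y -> phi W h s y = f y) &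
      (forall W W' (h : osubset W U) (h' : osubset W' U) (hWW : osubset W' W) s y,
          oset W' y -> phi W' h' (res hWW s) y = phi W h s y)].

Definition locally_constant k X (tX : topology X) (S : sheaf k tX) : Prop :=
  forall x : X, exists U : opens tX, oset U x /\ simple S U.

Definition stalkwise_iso k X (tX : topology X) (G F : sheaf k tX)
  (Phi : forall x, stalk_at G x -> stalk_at F x) : Prop :=
  forall x, linear (Phi x) /\ bijective (Phi x).

(* a (classical) inverse of f; it is the genuine inverse whenever f is bijective *)
Definition finv (A B : Type) (a0 : A) (f : A -> B) (b : B) : A :=
  epsilon (inhabits a0) (fun a => f a = b).

(* upsilon(Phi)^U_{yx} = G_{y∈U}^{-1} Phi_y^{-1} F_{y∈U} F_{x∈U}^{-1} Phi_x G_{x∈U} *)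
Definition deviation k X (tX : topology X) (G F : sheaf k tX)
  (Phi : forall x, stalk_at G x -> stalk_at F x) (U : opens tX) (x y : X)
  (hx : oset U x) (hy : oset U y) (s : sec (psh G) U) : sec (psh G) U :=
  finv 0 (germ_at G hy)
    (finv 0 (Phi y)
       (germ_at F hy (finv 0 (germ_at F hx) (Phi x (germ_at G hx s))))).

Definition is_sheaf_iso k X (tX : topology X) (F F' : sheaf k tX)
  (T : forall U, sec (psh F) U -> sec (psh F') U) : Prop :=
  [/\ (forall U, linear (T U)),
      (forall U V (h : osubset U V) s, T U (res h s) = res h (T V s)) &
      (forall U, bijective (T U))].

Record germ_rep k X (tX : topology X) (F : sheaf k tX) (x : X) := GermRep {
  gr_U : opens tX; gr_hx : oset gr_U x; gr_s : sec (psh F) gr_U }.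

Definition stalk_map k X (tX : topology X) (F F' : sheaf k tX)
  (T : forall U, sec (psh F) U -> sec (psh F') U) (x : X) (v : stalk_at F x)
  : stalk_at F' x :=
  let r := epsilon (inhabits (@GermRep k X tX F x (otop tX) I 0))
             (fun r => germ_at F (gr_hx r) (gr_s r) = v) in
  germ_at F' (gr_hx r) (T (gr_U r) (gr_s r)).
Arguments stalk_map {k X tX F F'} T x v.

(* Main.v *)
Require Import Defs.
From HB Require Import structures.
From mathcomp Require Import all_boot all_algebra.
From Stdlib Require Import ClassicalEpsilon ProofIrrelevance Classical.
Set Implicit Arguments. Unset Strict Implicit. Unset Printing Implicit Defensive.
Import GRing.Theory.
Local Open Scope ring_scope.

Section Gen.
Variables (k : fieldType) (X : Type) (tX : topology X).

Lemma res_pi (p : presheaf k tX) (U V : opens tX) (h1 h2 : osubset U V) (s : sec p V) :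
  res h1 s = res h2 s.
Proof. by rewrite (proof_irrelevance _ h1 h2). Qed.

Lemma finv_r (A B : Type) (a0 : A) (f : A -> B) b :
  (exists a, f a = b) -> f (Defs.finv a0 f b) = b.
Proof. move=> h; exact: (epsilon_spec (inhabits a0) (fun a => f a = b) h). Qed.

Lemma finv_l (A B : Type) (a0 : A) (f : A -> B) a :
  injective f -> Defs.finv a0 f (f a) = a.
Proof. move=> hi; apply: hi; apply: finv_r; by exists a. Qed.

Lemma GL (S : sheaf k tX) (W : opens tX) (s t : sec (psh S) W) :
  (forall x (hx : oset W x), germ_at S hx s = germ_at S hx t) -> s = t.
Proof.
move=> H.
pose I := {V : opens tX | osubset V W /\ forall h : osubset V W, res h s = res h t}.
apply: (@locality _ _ _ S W I (fun i => proj1_sig i) (fun i => proj1 (proj2_sig i))).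
  move=> x hx; have := germ_eq (H x hx) => -[W' [h1 [h2 [hxW' e]]]].
  have hh : forall h : osubset W' W, res h s = res h t.
    by move=> h; rewrite (res_pi h h1) e (res_pi h2 h).
  by exists (exist _ W' (conj h1 hh)).
by move=> [V [h1 h2]] /=; apply: h2.
Qed.

Definition ounion (Q : opens tX -> Prop) : opens tX :=
  Opens (@open_union _ tX {V | Q V} (fun i => oset (proj1_sig i)) (fun i => oopen (proj1_sig i))).

Lemma ounionP Q y : oset (ounion Q) y <-> exists V, Q V /\ oset V y.
Proof.
split; first by move=> [[V hV] /= hy]; exists V.
by move=> [V [hV hy]]; exists (exist _ V hV).
Qed.

Lemma LC (A : Type) (U : opens tX) (f : X -> A) x :
  connected U -> loc_const_on U f -> oset U x -> forall y, oset U y -> f y = f x.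
Proof.
move=> hc hf hx.
pose OA := ounion (fun V => forall z, oset V z -> oset U z /\ f z = f x).
pose OB := ounion (fun V => forall z, oset V z -> oset U z /\ f z <> f x).
have cov : forall y, oset U y -> oset OA y \/ oset OB y.
  move=> y hy; have [V [hVy hVU hVc]] := hf y hy.
  case: (classic (f y = f x)) => e.
    left; apply/ounionP; exists V; split=> // z hz; split; first exact: hVU.
    by rewrite hVc.
  right; apply/ounionP; exists V; split=> // z hz; split; first exact: hVU.
  by rewrite hVc.
have dis : forall y, oset U y -> oset OA y -> oset OB y -> False.
  move=> y _ /ounionP [V1 [h1 hy1]] /ounionP [V2 [h2 hy2]].
  by have [_ e1] := h1 y hy1; have [_ e2] := h2 y hy2.
case: (hc OA OB cov dis) => hall y hy.
  by have /ounionP [V [h hyV]] := hall y hy; have [] := h y hyV.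
by have /ounionP [V [h hxV]] := hall x hx; have [_ []] := h x hxV.
Qed.


Lemma osub_refl (U : opens tX) : osubset U U.
Proof. by []. Qed.

Lemma germ_inj (S : sheaf k tX) (U : opens tX) x (hx : oset U x) :
  connected U -> simple S U -> injective (germ_at S hx).
Proof.
move=> hc [A [phi [hlin hlc hinj hsurj hnat]]] s t e.
have [W [h1 [h2 [hxW e2]]]] := germ_eq e.
have hUU : osubset U U by [].
apply: (hinj U hUU) => y hy.
rewrite (LC hc (hlc U hUU s) hx hy) (LC hc (hlc U hUU t) hx hy).
rewrite -(hnat U W hUU h1 h1 s x hxW) -(hnat U W hUU h1 h1 t x hxW).
by rewrite e2 (res_pi h2 h1).
Qed.

Lemma germ_onto (S : sheaf k tX) (U : opens tX) x (hx : oset U x) :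
  simple S U -> forall v, exists s, germ_at S hx s = v.
Proof.
move=> [A [phi [hlin hlc hinj hsurj hnat]]] v.
have [V [hxV [s0 e]]] := germ_surj v.
pose W := ointer V U.
have hWU : osubset W U := @osubset_interr _ _ V U.
have hWV : osubset W V := @osubset_interl _ _ V U.
pose s' := res hWV s0.
have hxW : oset W x by split.
have [V' [hxV' hV'W hcst]] := hlc W hWU s' x hxW.
pose c := phi W hWU s' x.
have hUU : osubset U U by [].
have [sg hsg] := hsurj U hUU (fun _ => c) (fun y hy => ex_intro _ U (And3 hy hUU (fun _ _ => erefl))).
exists sg.
have hV'U : osubset V' U := fun z hz => hWU z (hV'W z hz).
rewrite -e /germ_at -(germ_res (stalks S x) hV'U hxV' hx) -(germ_res (stalks S x) hWV hxW hxV).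
rewrite -(germ_res (stalks S x) hV'W hxV' hxW); congr germ.
apply: (hinj V' hV'U) => y hy.
rewrite (hnat U V' hUU hV'U hV'U sg y hy) hsg; last exact: hV'U.
by rewrite (hnat W V' hWU hV'U hV'W s' y hy) hcst.
Qed.

Lemma simple_sub (S : sheaf k tX) (U V : opens tX) :
  osubset V U -> simple S U -> simple S V.
Proof.
move=> hVU [A [phi [hlin hlc hinj hsurj hnat]]].
exists A, (fun W (h : osubset W V) => phi W (fun z hz => hVU z (h z hz))).
split.
- by move=> W h; apply: hlin.
- by move=> W h; apply: hlc.
- by move=> W h; apply: hinj.
- by move=> W h; apply: hsurj.
- by move=> W W' h h' hWW s y hy; apply: hnat.
Qed.


Definition Pr (A B : sheaf k tX) (Th : forall x, stalk_at A x -> stalk_at B x)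
  (W : opens tX) (s : sec (psh A) W) (t : sec (psh B) W) : Prop :=
  forall x (hx : oset W x), germ_at B hx t = Th x (germ_at A hx s).

Lemma GE (A B : sheaf k tX) (Th : forall x, stalk_at A x -> stalk_at B x) :
  (forall x (W : opens tX), oset W x -> exists V : opens tX,
     [/\ oset V x, osubset V W & forall s : sec (psh A) V, exists t, Pr Th s t]) ->
  forall W (s : sec (psh A) W), exists t, Pr Th s t.
Proof.
move=> Hloc W s.
pose I := {V : opens tX | osubset V W /\ forall s : sec (psh A) V, exists t, Pr Th s t}.
pose Vi := fun i : I => proj1_sig i.
pose hV := fun i : I => proj1 (proj2_sig i).
pose ti := fun i : I => epsilon (inhabits 0) (Pr Th (res (hV i) s)).
have hti : forall i, Pr Th (res (hV i) s) (ti i).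
  move=> i; apply: (epsilon_spec (inhabits 0) (Pr Th (res (hV i) s))).
  exact: (proj2 (proj2_sig i)).
have cov : forall x, oset W x -> exists i : I, oset (Vi i) x.
  move=> x hx; have [V [hxV hVW hV2]] := Hloc x W hx.
  by exists (exist _ V (conj hVW hV2)).
have [t ht] : exists t : sec (psh B) W, forall i, res (hV i) t = ti i.
  apply: (@gluing _ _ _ B W I Vi hV cov ti) => i j.
  apply: GL => y hy.
  rewrite /germ_at (germ_res (stalks B y) _ hy (proj1 hy)) (germ_res (stalks B y) _ hy (proj2 hy)).
  rewrite -/(germ_at B _ (ti i)) -/(germ_at B _ (ti j)) !(hti _ y) /germ_at.
  rewrite (germ_res (stalks A y) _ (proj1 hy) (hV i y (proj1 hy))) (germ_res (stalks A y) _ (proj2 hy) (hV j y (proj2 hy))).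
  by rewrite (proof_irrelevance _ (hV i y (proj1 hy)) (hV j y (proj2 hy))).
exists t => x hx.
have [i hxi] := cov x hx.
rewrite /germ_at -(germ_res (stalks B x) (hV i) hxi hx) ht.
by rewrite -/(germ_at B hxi (ti i)) (hti i x hxi) /germ_at (germ_res (stalks A x) _ hxi hx).
Qed.

Lemma Pr_uniq (A B : sheaf k tX) (Th : forall x, stalk_at A x -> stalk_at B x) W
  (s : sec (psh A) W) t1 t2 : Pr Th s t1 -> Pr Th s t2 -> t1 = t2.
Proof. by move=> h1 h2; apply: GL => x hx; rewrite h1 h2. Qed.

Lemma SM (F F' : sheaf k tX) (T : forall U, sec (psh F) U -> sec (psh F') U) :
  (forall U V (h : osubset U V) s, T U (res h s) = res h (T V s)) ->
  forall x U (hx : oset U x) s, stalk_map T x (germ_at F hx s) = germ_at F' hx (T U s).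
Proof.
move=> hn x U hx s; rewrite /stalk_map.
set r := epsilon _ _.
have hr : germ_at F (gr_hx r) (gr_s r) = germ_at F hx s.
  apply: (epsilon_spec _ (fun r : germ_rep F x => germ_at F (gr_hx r) (gr_s r) = germ_at F hx s)).
  by exists (GermRep hx s).
have [W [h1 [h2 [hxW e]]]] := germ_eq hr.
rewrite /germ_at -(germ_res (stalks F' x) h1 hxW) -hn e hn.
by rewrite (germ_res (stalks F' x) h2 hxW).
Qed.

End Gen.

Unset Implicit Arguments.
Section Main.
Variables (k : fieldType) (X : Type) (tX : topology X) (G F F' : sheaf k tX).
Hypothesis hX : locally_connected tX.
Hypotheses (hG : locally_constant G) (hF : locally_constant F) (hF' : locally_constant F').
Variables (Phi : forall x, stalk_at G x -> stalk_at F x)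
  (Psi : forall x, stalk_at G x -> stalk_at F' x).
Hypotheses (hPhi : stalkwise_iso Phi) (hPsi : stalkwise_iso Psi).
Hypothesis hdev : forall (x y : X) (U : opens tX) (hx : oset U x) (hy : oset U y),
      connected U -> simple G U -> simple F U -> simple F' U ->
      forall s, deviation Phi hx hy s = deviation Psi hx hy s.

Definition basic (V : opens tX) := [/\ connected V, simple G V, simple F V & simple F' V].

Lemma basic_nbhd x (W : opens tX) : oset W x ->
  exists V, [/\ oset V x, osubset V W & basic V].
Proof.
move=> hx.
have [UG [hxG sG]] := hG x; have [UF [hxF sF]] := hF x; have [UF' [hxF' sF']] := hF' x.
pose W0 := ointer W (ointer UG (ointer UF UF')).
have hx0 : oset W0 x by [].
have [V [hxV hVW0 hc]] := hX x W0 hx0.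
exists V; split => //.
  by move=> z /hVW0 [].
split => //.
- by apply: (simple_sub _ sG) => z /hVW0 [_ []].
- by apply: (simple_sub _ sF) => z /hVW0 [_ [_ []]].
- by apply: (simple_sub _ sF') => z /hVW0 [_ [_ []]].
Qed.

Lemma iso_facts (A B : lmodType k) (f : A -> B) : linear f /\ bijective f ->
  [/\ injective f, (forall b, f (Defs.finv 0 f b) = b),
      (forall a, Defs.finv 0 f (f a) = a) & linear (Defs.finv 0 f)].
Proof.
move=> [hl [g c1 c2]].
have hi : injective f := can_inj c1.
have hr : forall b, f (Defs.finv 0 f b) = b by move=> b; apply: finv_r; exists (g b).
have hl' : forall a, Defs.finv 0 f (f a) = a by move=> a; apply: finv_l.
split => // a u v; apply: hi.
by rewrite hl !hr.
Qed.

Definition Pinv (x : X) := Defs.finv 0 (Phi x).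
Definition Qinv (x : X) := Defs.finv 0 (Psi x).
Definition Th x (v : stalk_at F x) : stalk_at F' x := Psi x (Pinv x v).
Definition Th' x (v : stalk_at F' x) : stalk_at F x := Phi x (Qinv x v).

Lemma Pr_ (x : X) : (forall b, Phi x (Pinv x b) = b) /\ (forall a, Pinv x (Phi x a) = a).
Proof. by have [] := iso_facts _ _ _ (hPhi x). Qed.
Lemma Qr_ (x : X) : (forall b, Psi x (Qinv x b) = b) /\ (forall a, Qinv x (Psi x a) = a).
Proof. by have [] := iso_facts _ _ _ (hPsi x). Qed.

Definition Tloc (V : opens tX) x (hx : oset V x) (s : sec (psh F) V) : sec (psh F') V :=
  Defs.finv 0 (germ_at F' hx) (Th x (germ_at F hx s)).
Arguments Tloc {V x} hx s.

Lemma L3 V x (hx : oset V x) s : basic V -> germ_at F' hx (Tloc hx s) = Th x (germ_at F hx s).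
Proof. move=> [hc sG sF sF']; apply: finv_r; exact: germ_onto. Qed.

Lemma L2 V x y (hx : oset V x) (hy : oset V y) s : basic V -> Tloc hx s = Tloc hy s.
Proof.
move=> hb; have [hc sG sF sF'] := hb.
have [t ht] := germ_onto hx sG (Pinv x (germ_at F hx s)).
have := hdev x y V hx hy hc sG sF sF' t.
rewrite /deviation ht (proj1 (Pr_ x)) finv_l; last exact: germ_inj.
move=> e.
have e2 := f_equal (germ_at G hy) e.
rewrite !finv_r in e2; try exact: germ_onto.
have e3 := f_equal (Psi y) e2.
rewrite (proj1 (Qr_ y)) in e3.
rewrite -/(Pinv y _) -/(Th y _) in e3.
rewrite [RHS]/Tloc e3 finv_l //; exact: germ_inj.
Qed.
Arguments L2 {V x y} hx hy s.
Arguments L3 {V x} hx s.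

Lemma HlocF x (W : opens tX) : oset W x -> exists V : opens tX,
     [/\ oset V x, osubset V W & forall s : sec (psh F) V, exists t, Pr Th s t].
Proof.
move=> hx; have [V [hxV hVW hb]] := basic_nbhd x W hx.
exists V; split => // s; exists (Tloc hxV s) => y hy.
by rewrite (L2 hxV hy s hb) L3.
Qed.

Lemma HlocF' x (W : opens tX) : oset W x -> exists V : opens tX,
     [/\ oset V x, osubset V W & forall s : sec (psh F') V, exists t, Pr Th' s t].
Proof.
move=> hx; have [V [hxV hVW hb]] := basic_nbhd x W hx.
have [hc sG sF sF'] := hb.
exists V; split => // s'.
pose s := Defs.finv 0 (germ_at F hxV) (Phi x (Qinv x (germ_at F' hxV s'))).
have e : Tloc hxV s = s'.
  rewrite /Tloc /s finv_r; last exact: germ_onto.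
  rewrite /Th (proj2 (Pr_ x)) (proj1 (Qr_ x)) finv_l //; exact: germ_inj.
exists s => y hy.
rewrite -e (L2 hxV hy s hb) L3 // /Th' /Th (proj2 (Qr_ y)) (proj1 (Pr_ y)) //.
Qed.

Definition T (W : opens tX) (s : sec (psh F) W) : sec (psh F') W :=
  epsilon (inhabits 0) (Pr Th s).

Lemma hT W s : Pr Th s (T W s).
Proof. apply: (epsilon_spec (inhabits 0) (Pr Th s)); exact: GE HlocF W s. Qed.


Lemma Th_lin x : linear (Th x).
Proof.
have [_ _ _ hl] := iso_facts _ _ _ (hPhi x).
move=> a u v; rewrite /Th /Pinv hl; exact: (proj1 (hPsi x)).
Qed.

Lemma main_ex :
  exists T : forall U, sec (psh F) U -> sec (psh F') U,
    [/\ is_sheaf_iso T,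
        (forall x g, Psi x g = stalk_map T x (Phi x g)) &
        (forall T' : forall U, sec (psh F) U -> sec (psh F') U,
           is_sheaf_iso T' -> (forall x g, Psi x g = stalk_map T' x (Phi x g)) ->
           forall U s, T' U s = T U s)].
Proof.
have hnat : forall U V (h : osubset U V) s, T U (res h s) = res h (T V s).
  move=> U V h s; apply: (Pr_uniq (hT U (res h s))) => x hx.
  rewrite /germ_at (germ_res (stalks F' x) h hx (h x hx)) (germ_res (stalks F x) h hx (h x hx)).
  exact: hT.
have hinj : forall U, injective (T U).
  move=> U s1 s2 e; apply: GL => x hx.
  have [hiP _ _ _] := iso_facts _ _ _ (hPsi x).
  have := hT U s1 x hx; rewrite e (hT U s2 x hx) /Th => /hiP e2. have := f_equal (Phi x) e2; by rewrite !(proj1 (Pr_ x)).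
have hsurj : forall U (t : sec (psh F') U), exists s, T U s = t.
  move=> U t; have [s hs] := GE HlocF' t.
  exists s; apply: (Pr_uniq (hT U s)) => x hx.
  by rewrite hs /Th /Th' (proj2 (Pr_ x)) (proj1 (Qr_ x)).
exists T; split.
- split => // U.
  + move=> a u v; apply: (Pr_uniq (hT U (a *: u + v))) => x hx.
    rewrite /germ_at (germ_linear (stalks F' x) hx) -!/(germ_at F' hx _) !hT.
    by rewrite -Th_lin /germ_at (germ_linear (stalks F x) hx).
  + exists (Defs.finv 0 (T U)) => s; first exact: finv_l.
    by apply: finv_r; apply: hsurj.
- move=> x g.
  have [U [hx [s e]]] := germ_surj (Phi x g).
  rewrite -e -/(germ_at F hx s) (SM hnat) (hT U s x hx) /Th /germ_at e (proj2 (Pr_ x)) //.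
- move=> T' [hl' hn' hb'] H' U s; symmetry; apply: (Pr_uniq (hT U s)) => x hx.
  rewrite -(SM hn') /Th -{1}((proj1 (Pr_ x)) (germ_at F hx s)) -H' //.
Qed.

End Main.

Theorem mainTheorem2 (k : fieldType) (X : Type) (tX : topology X)
  (G F F' : sheaf k tX)
  (hX : locally_connected tX)
  (hG : locally_constant G) (hF : locally_constant F) (hF' : locally_constant F')
  (Phi : forall x, stalk_at G x -> stalk_at F x)
  (Psi : forall x, stalk_at G x -> stalk_at F' x)
  (hPhi : stalkwise_iso Phi) (hPsi : stalkwise_iso Psi)
  (hdev : forall (x y : X) (U : opens tX) (hx : oset U x) (hy : oset U y),
      connected U -> simple G U -> simple F U -> simple F' U ->
      forall s, deviation Phi hx hy s = deviation Psi hx hy s) :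
  exists T : forall U, sec (psh F) U -> sec (psh F') U,
    [/\ is_sheaf_iso T,
        (forall x g, Psi x g = stalk_map T x (Phi x g)) &
        (forall T' : forall U, sec (psh F) U -> sec (psh F') U,
           is_sheaf_iso T' -> (forall x g, Psi x g = stalk_map T' x (Phi x g)) ->
           forall U s, T' U s = T U s)].
Proof. exact: (main_ex k X tX G F F' hX hG hF hF' Phi Psi hPhi hPsi hdev). Qed.
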